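(* Consider the ViSE model described in the context, with $n$ participants, $\ell$ egoists and $g=n-\ell$ group members ($1\le\ell\le n-1$), $\mu\in\mathbb{R}$, $\sigma>0$ and majority threshold $\alpha\in[0,1)$; let $\delta=\ell/n$, $\gamma=\alpha+\delta-1$, $\beta=\ell/(n-\ell)$, and let $t_0$ be the group's claims threshold maximizing the expected one-step capital increment of the society, namely $t_0=\frac{\beta}{F_{\gamma n}-F_{\alpha n}}\big(\mu^+(\mu,\sigma,\ell,\alpha n)-\mu^+(\mu,\sigma,\ell,\gamma n)\big)$. Then: (i) if $\alpha<1-\delta$, then $t_0=\frac{\beta}{1-F_{\alpha n}}\big(\mu^+(\mu,\sigma,\ell,\alpha n)-\mu\big)$; (ii) if $\delta\le\alpha$, then $t_0=-\frac{\beta}{F_{\gamma n}}\,\mu^+(\mu,\sigma,\ell,\gamma n)$; (iii) if $\delta\le\alpha<1-\delta$, then $t_0=-\beta\mu$.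
   Context: ViSE model (one voting step). A society consists of $n$ participants: $\ell$ ''egoists'' and $g=n-\ell$ ''group members'', $1\le\ell\le n-1$. Fix $\mu\in\mathbb{R}$, $\sigma>0$, a majority threshold $\alpha$ and a group claims threshold $t\in\mathbb{R}$. A proposal is a random vector $(\zeta_1,\dots,\zeta_n)$ of independent $N(\mu,\sigma^2)$ random variables, $\zeta_i$ being the proposed capital increment of participant $i$. Each egoist votes for the proposal iff his own component is strictly positive. All group members vote for the proposal iff the arithmetic mean of the group members' components is strictly greater than $t$; otherwise they all vote against. The proposal is accepted iff the number of votes for it is strictly greater than $\alpha n$. If accepted, each participant's capital increment equals his component; otherwise it is $0$. $F$ denotes the standard normal distribution function. $p=F(\mu/\sigma)$, $q=1-p$, and for real $\xi$, $F_\xi=\sum_{x=\max(0,[\xi]+1)}^{\ell}\binom{\ell}{x}p^xq^{\ell-x}$ ($[\xi]$ the integer part; empty sum $=0$), the probability that more than $\xi$ egoists vote for the proposal. For integer $\ell\ge1$ and real $\ell_0$, $\mu^+(\mu,\sigma,\ell,\ell_0)=\mathrm{M}\big(\xi_1\cdot\mathbf{1}\{\#\{i:\xi_i>0\}>\ell_0\}\big)$ where $\xi_1,\dots,\xi_\ell$ are i.i.d. $N(\mu,\sigma^2)$. *)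

(* Defs.v *)
From HB Require Import structures.
From mathcomp Require Import all_boot all_order all_algebra.
From mathcomp Require Import all_classical all_reals all_analysis.
From mathcomp Require Import normal_distribution.
Set Implicit Arguments. Unset Strict Implicit. Unset Printing Implicit Defensive.
Import Order.TTheory GRing.Theory Num.Theory.
Local Open Scope classical_set_scope.
Local Open Scope ring_scope.

Section ViSE.
Context {R : realType}.

Definition std_normal_cdf (x : R) : R := fine (normal_prob 0 1 `]-oo, x]).

(* p = F(mu/sigma): probability that an egoist votes for the proposal. *)
Definition vise_p (mu sigma : R) : R := std_normal_cdf (mu / sigma).

Definition vise_F (mu sigma : R) (l : nat) (xi : R) : R :=
  let p := vise_p mu sigma in
  \sum_(0 <= x < l.+1 | (Num.max 0 (Num.floor xi + 1) <= x%:Z)%R)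
     'C(l, x)%:R * p ^+ x * (1 - p) ^+ (l - x).

(* Expectation of h(xi_1,...,xi_k) for xi_i i.i.d. N(mu, sigma^2),
   computed as the iterated integral against the product of the
   normal distributions (first coordinate outermost). *)
Fixpoint gauss_iter (mu sigma : R) (k : nat) (h : seq R -> R) : R :=
  match k with
  | 0 => h [::]
  | k'.+1 => Rintegral (normal_prob mu sigma) setT
               (fun x => gauss_iter mu sigma k' (fun v => h (x :: v)))
  end.

Definition mu_plus (mu sigma : R) (l : nat) (l0 : R) : R :=
  gauss_iter mu sigma l
    (fun v => head 0 v * (if l0 < (count (fun y => 0 < y) v)%:R then 1 else 0)).

End ViSE.

(* Main.v *)
Require Import Defs.
From HB Require Import structures.
From mathcomp Require Import all_boot all_order all_algebra.
From mathcomp Require Import all_classical all_reals all_analysis.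
From mathcomp Require Import normal_distribution.
From mathcomp Require Import zify ring lra measurable_realfun.
Import Order.TTheory GRing.Theory Num.Theory.
Local Open Scope ring_scope.

Import numFieldNormedType.Exports.

Section aux.
Local Open Scope classical_set_scope.

Lemma dF (R : realType) (c s x : R) : s != 0 ->
  is_derive x 1 (fun y : R => - s ^+ 2 * normal_fun c s y) ((x - c) * normal_fun c s x).
Proof.
move=> s0; rewrite /normal_fun.
apply: is_derive_eq.
set E := expR _. rewrite scaler0 add0r subr0 !scaler1. rewrite /GRing.scale /=. by field.
Qed.

Lemma nf_cvg (R : realType) (c s : R) : s != 0 ->
  normal_fun c s x @[x --> +oo] --> 0.
Proof.
move=> s0.
have k0 : 0 < s ^+ 2 *+ 2 by rewrite pmulrn_lgt0 // exprn_even_gt0.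
rewrite /normal_fun.
have -> : (fun x => expR (- (x - c) ^+ 2 / (s ^+ 2 *+ 2))) =
   (fun y => expR (- y)) \o (fun x => (x - c) ^+ 2 / (s ^+ 2 *+ 2)).
  by apply/funext => x /=; rewrite mulNr.
apply: cvg_comp; last exact: cvgr_expR.
apply/cvgryPge => A; near=> x.
rewrite ler_pdivlMr //.
have h1 : 1 + c <= x by near: x; apply: nbhs_pinfty_ge; rewrite num_real.
have h2 : `|A| * (s ^+ 2 *+ 2) + c <= x by near: x; apply: nbhs_pinfty_ge; rewrite num_real.
have h3 : A * (s ^+ 2 *+ 2) <= `|A| * (s ^+ 2 *+ 2) by rewrite ler_pM2r // ler_norm.
rewrite expr2; nra.
Unshelve. all: by end_near. Qed.

Lemma half_int (R : realType) (c s : R) : s != 0 ->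
  (\int[@lebesgue_measure R]_(x in `[c, +oo[) ((x - c) * normal_fun c s x)%:E = (s ^+ 2)%:E)%E.
Proof.
move=> s0.
have cf : continuous (fun x => (x - c) * normal_fun c s x).
  move=> x; apply: differentiable_continuous; apply/derivable1_diffP.
  rewrite /normal_fun; done.
rewrite (@ge0_continuous_FTC2y _ (fun x => (x - c) * normal_fun c s x)
   (fun y : R => - s ^+ 2 * normal_fun c s y) c 0).
- by rewrite /normal_fun subrr expr0n /= oppr0 mul0r expR0 mulr1 add0e opprK.
- by move=> x cx; rewrite mulr_ge0 ?subr_ge0 ?normal_fun_ge0.
- exact: continuous_subspaceT.
- rewrite -(mulr0 (- s ^+ 2)); apply: cvgMr; exact: nf_cvg.
- by move=> x _; case: (dF _ c s x s0).
- apply: cvg_at_right_filter.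
  have hd : derivable (fun y : R => - s ^+ 2 * normal_fun c s y) c 1 by case: (dF _ c s c s0).
  move/derivable1_diffP/differentiable_continuous: hd. exact.
- by move=> x _; rewrite derive1E; case: (dF _ c s x s0) => _ ->.
Qed.

Lemma half_int_left (R : realType) (c s : R) : s != 0 ->
  (\int[@lebesgue_measure R]_(x in `]-oo, c]) ((c - x) * normal_fun c s x)%:E = (s ^+ 2)%:E)%E.
Proof.
move=> s0.
have cf : continuous (fun x => (c - x) * normal_fun c s x).
  move=> x; apply: differentiable_continuous; apply/derivable1_diffP.
  rewrite /normal_fun; done.
have := @ge0_integration_by_substitutionNy R (fun x => (c - x) * normal_fun c s x) (- c).
rewrite opprK => ->.
- rewrite -(@half_int _ (- c) s s0); apply: eq_integral => x _ /=.
  congr EFin; rewrite /normal_fun; congr (_ * expR (- _ / _)); ring.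
- exact: continuous_subspaceT.
- by move=> x; rewrite in_itv /= => cx; rewrite mulr_ge0 ?subr_ge0 ?normal_fun_ge0 // ltW.
Qed.

Lemma normal_cov (R : realType) (m s : R) (f : R -> \bar R) :
  measurable_fun [set: R] f -> (forall x, (0 <= f x)%E) ->
  (\int[normal_prob m s]_x f x =
   \int[@lebesgue_measure R]_x (f x * (normal_pdf m s x)%:E))%E.
Proof.
move=> mf f0.
have numu := normal_prob_dominates m s.
rewrite -(Radon_Nikodym_SigmaFinite.change_of_variables numu f0 measurableT mf).
set g := Radon_Nikodym_SigmaFinite.f _ _.
have mg : measurable_fun setT g.
  exact: (measurable_int _ (Radon_Nikodym_SigmaFinite.f_integrable numu)).
apply: ae_eq_integral => //.
- exact: emeasurable_funM.
- apply: emeasurable_funM => //; apply/measurable_EFinP; exact: measurable_normal_pdf.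
- apply: ae_eqe_mul2l; apply: ae_eq_sym; apply: integral_ae_eq => //.
  + exact: integrable_normal_pdf.
  + move=> E _ mE; rewrite -(Radon_Nikodym_SigmaFinite.f_integral numu mE).
    by [].
Qed.

Lemma pos_part (R : realType) (m s : R) : s != 0 ->
  (\int[normal_prob m s]_x ((fun x => (x - m)%:E)^\+ x) = (normal_peak s * s ^+ 2)%:E)%E.
Proof.
move=> s0.
have mG : measurable_fun [set: R] (fun x : R => (x - m)%:E).
  by apply/measurable_EFinP; exact: measurable_funB.
rewrite normal_cov; last 2 first.
- exact: measurable_funepos.
- by move=> x; exact: funepos_ge0.
rewrite (normal_pdfE _ s0).
transitivity (\int[@lebesgue_measure R]_(x in `[m, +oo[)
    ((normal_peak s)%:E * ((x - m) * normal_fun m s x)%:E))%E.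
  rewrite [RHS]integral_mkcond; apply: eq_integral => x _.
  rewrite funeposE patchE -EFin_max -EFinM -EFinM; case: ifPn => hx.
    rewrite inE /= in_itv /= andbT in hx.
    by rewrite (max_idPl _) ?subr_ge0 //; congr EFin; ring.
  move: hx; rewrite notin_setE /= in_itv /= andbT => /negP; rewrite -ltNge => hx.
  by rewrite (max_idPr _) ?mul0r // subr_le0 ltW.
rewrite ge0_integralZl_EFin //; last 3 first.
- move=> x /=; rewrite in_itv /= andbT => hx; rewrite lee_fin mulr_ge0 ?subr_ge0 ?normal_fun_ge0 //.
- apply/measurable_funTS/measurable_EFinP; apply: measurable_funM.
    exact: measurable_funB.
  exact: measurable_normal_fun.
- exact: normal_peak_ge0.
by rewrite half_int // -EFinM.
Qed.

Lemma neg_part (R : realType) (m s : R) : s != 0 ->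
  (\int[normal_prob m s]_x ((fun x => (x - m)%:E)^\- x) = (normal_peak s * s ^+ 2)%:E)%E.
Proof.
move=> s0.
have mG : measurable_fun [set: R] (fun x : R => (x - m)%:E).
  by apply/measurable_EFinP; exact: measurable_funB.
rewrite normal_cov; last 2 first.
- exact: measurable_funeneg.
- by move=> x; exact: funeneg_ge0.
rewrite (normal_pdfE _ s0).
transitivity (\int[@lebesgue_measure R]_(x in `]-oo, m])
    ((normal_peak s)%:E * ((m - x) * normal_fun m s x)%:E))%E.
  rewrite [RHS]integral_mkcond; apply: eq_integral => x _.
  rewrite funenegE patchE -EFinN -EFin_max -EFinM -EFinM; case: ifPn => hx.
    rewrite inE /= in_itv /= in hx.
    by rewrite (max_idPl _) ?opprB ?subr_ge0 //; congr EFin; ring.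
  move: hx; rewrite notin_setE /= in_itv /= => /negP; rewrite -ltNge => hx.
  by rewrite (max_idPr _) ?mul0r // opprB subr_le0 ltW.
rewrite ge0_integralZl_EFin //; last 3 first.
- move=> x /=; rewrite in_itv /= => hx; rewrite lee_fin mulr_ge0 ?subr_ge0 ?normal_fun_ge0 //.
- apply/measurable_funTS/measurable_EFinP; apply: measurable_funM.
    exact: measurable_funB.
  exact: measurable_normal_fun.
- exact: normal_peak_ge0.
by rewrite half_int_left // -EFinM.
Qed.

Lemma normal_mean (R : realType) (m s : R) : 0 < s ->
  Rintegral (normal_prob m s) setT (fun x => x) = m.
Proof.
move=> s0'; have s0 : s != 0 by rewrite gt_eqF.
set G := fun x : R => (x - m)%:E.
have mG : measurable_fun [set: R] G.
  by apply/measurable_EFinP; exact: measurable_funB.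
have hp := @pos_part R m s s0; have hn := @neg_part R m s s0.
have iG : (normal_prob m s).-integrable setT (EFin \o (fun x => x - m)).
  apply/integrableP; split; first exact: mG.
  rewrite (_ : (\int[_]_x _ = \int[normal_prob m s]_x (G^\+ x + G^\- x))%E); last first.
    by apply: eq_integral => x _; have := congr1 (fun h => h x) (fune_abse G).
  rewrite ge0_integralD //.
  - by rewrite hp hn -EFinD ltry.
  - exact: measurable_funepos.
  - exact: measurable_funeneg.
have int0 : (\int[normal_prob m s]_x G x = 0)%E by rewrite integralE hp hn subee.
rewrite (_ : (fun x : R => x) = (fun x => (x - m) + m)); last by apply/funext => x; rewrite subrK.
rewrite RintegralD //; last exact: finite_measure_integrable_cst.
rewrite Rintegral_cst // [X in m * fine X](_ : _ = 1%E) /= ?mulr1; last exact: probability_setT.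
by rewrite /Rintegral int0 /= add0r.
Qed.

End aux.


Lemma gauss_iter_ext (R : realType) (mu sigma : R) k (h h' : seq R -> R) :
  (forall v, size v = k -> h v = h' v) ->
  gauss_iter mu sigma k h = gauss_iter mu sigma k h'.
Proof.
elim: k h h' => [|k IH] h h' hh /=; first exact: hh.
congr Rintegral; apply/funext => x; apply: IH => v sv.
by apply: hh; rewrite /= sv.
Qed.

Lemma gauss_iter_cst (R : realType) (mu sigma : R) k (c : R) :
  gauss_iter mu sigma k (fun _ => c) = c.
Proof.
elim: k => [|k IH] //=.
rewrite IH Rintegral_cst //=; rewrite (probability_setT (normal_prob mu sigma)) /= mulr1 //.
Qed.

Lemma vise_F_neg (R : realType) (mu sigma : R) l xi : xi < 0 ->
  vise_F mu sigma l xi = 1.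
Proof.
move=> xi0; rewrite /vise_F.
have -> : Num.max 0 (Num.floor xi + 1) = 0.
  apply/max_idPl; have h : Num.floor xi < 0 by rewrite floor_lt0.
  by rewrite lezD1.
rewrite (eq_bigl xpredT) //= big_mkord.
transitivity ((1 - vise_p mu sigma + vise_p mu sigma) ^+ l); last first.
  by rewrite subrK expr1n.
rewrite exprDn; apply: eq_bigr => i _.
by rewrite -mulr_natl; ring.
Qed.

Lemma vise_F_big (R : realType) (mu sigma : R) (l : nat) xi : l%:R <= xi ->
  vise_F mu sigma l xi = 0.
Proof.
move=> lxi; rewrite /vise_F big_nat_cond big1 // => i /andP[/andP[_ h2] h3].
have h1 : (l%:Z <= Num.floor xi) by rewrite floor_ge_int.
exfalso.
have : Num.floor xi + 1 <= i%:Z by rewrite (le_trans _ h3) // le_max lexx orbT.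
lia.
Qed.


Lemma mu_plus_big (R : realType) (mu sigma : R) (l : nat) l0 : l%:R <= l0 ->
  mu_plus mu sigma l l0 = 0.
Proof.
move=> ll0; rewrite /mu_plus (@gauss_iter_ext _ _ _ _ _ (fun _ => 0)).
  exact: gauss_iter_cst.
move=> v sv; have : (count (fun y : R => (0 < y)%R) v <= l)%N by rewrite -sv count_size.
rewrite -(ler_nat R) => h.
by rewrite ifF ?mulr0 //; apply/negbTE; rewrite -leNgt (le_trans h).
Qed.

Lemma mu_plus_neg (R : realType) (mu sigma : R) (l : nat) l0 :
  0 < sigma -> (1 <= l)%N -> l0 < 0 -> mu_plus mu sigma l l0 = mu.
Proof.
move=> s0 l1 l00; rewrite /mu_plus (@gauss_iter_ext _ _ _ _ _ (fun v => head 0 v)).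
  case: l l1 => // k _ /=.
  rewrite (_ : (fun x => _) = (fun x => x)); first exact: normal_mean.
  by apply/funext => x; rewrite gauss_iter_cst.
by move=> v _; rewrite ifT ?mulr1 // (lt_le_trans l00).
Qed.

Theorem mainTheorem4 (R : realType) (n l : nat) (mu sigma alpha : R) :
  (1 <= l)%N -> (l <= n - 1)%N -> 0 < sigma -> 0 <= alpha -> alpha < 1 ->
  let delta := l%:R / n%:R in
  let gamma := alpha + delta - 1 in
  let beta := l%:R / (n - l)%:R in
  let t0 := beta / (vise_F mu sigma l (gamma * n%:R) - vise_F mu sigma l (alpha * n%:R))
            * (mu_plus mu sigma l (alpha * n%:R) - mu_plus mu sigma l (gamma * n%:R)) in
  (alpha < 1 - delta ->
     t0 = beta / (1 - vise_F mu sigma l (alpha * n%:R))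
          * (mu_plus mu sigma l (alpha * n%:R) - mu)) /\
  (delta <= alpha ->
     t0 = - (beta / vise_F mu sigma l (gamma * n%:R)) * mu_plus mu sigma l (gamma * n%:R)) /\
  (delta <= alpha < 1 - delta -> t0 = - (beta * mu)).
Proof.
move=> l1 ln s0 a0 a1 delta gamma beta t0.
have hn : 0 < n%:R :> R by rewrite ltr0n; lia.
have e : delta * n%:R = l%:R by rewrite /delta divfK // gt_eqF.
have H1 : alpha < 1 - delta -> vise_F mu sigma l (gamma * n%:R) = 1 /\
    mu_plus mu sigma l (gamma * n%:R) = mu.
  move=> h; have g0 : gamma * n%:R < 0 by rewrite /gamma; nra.
  by split; [exact: vise_F_neg | exact: mu_plus_neg].
have H2 : delta <= alpha -> vise_F mu sigma l (alpha * n%:R) = 0 /\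
    mu_plus mu sigma l (alpha * n%:R) = 0.
  move=> h; have g0 : l%:R <= alpha * n%:R by nra.
  by split; [exact: vise_F_big | exact: mu_plus_big].
split; [|split].
- by rewrite /t0 => /H1 [-> ->].
- rewrite /t0 => /H2 [-> ->]; rewrite subr0 sub0r mulrN; ring.
- rewrite /t0 => /andP[/H2 [-> ->] /H1 [-> ->]]; rewrite subr0 sub0r divr1; ring.
Qed.
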